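(* Let $a,b,c,d\in\mathbb C$ with $a\notin\mathbb Z$ and $d\notin\{0,-1,-2,\dots\}$. Then, as an identity of formal power series in $x,y$, $${}_1F_1(a;d;x)\,F(b,c;1-a;y)=\mathrm H_{11}(a,b,c;d;x,-y)+\sum_{k=1}^\infty\sum_{l=1}^k\frac{(-1)^{k-l}(k-1)!}{(l-1)!\,l!\,(k-l)!}\,\frac{(b)_k(c)_k}{(1-a)_k(1-a)_{k-l}(d)_l}\,x^ly^k\,\mathrm H_{11}(a-k+l,b+k,c+k;d+l;x,-y).$$
   Context: Pochhammer symbol: $(\lambda)_k=\Gamma(\lambda+k)/\Gamma(\lambda)$ for every integer $k$ (possibly negative) whenever defined; $(\lambda)_0=1$. $F(a,b;c;x)=\sum_{k\ge0}\frac{(a)_k(b)_k}{(c)_k k!}x^k$, ${}_1F_1(a;c;x)=\sum_{k\ge0}\frac{(a)_k}{(c)_k k!}x^k$. Confluent Horn function $\mathrm H_{11}(a,b,c;d;x,y)=\sum_{p,q\ge0}\frac{(a)_{p-q}(b)_q(c)_q}{(d)_p\,p!\,q!}x^py^q$. All functions are regarded as formal power series in $x,y$; the infinite double sum converges in the formal (degree) topology. *)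

(* Defs.v *)
From HB Require Import structures.
From mathcomp Require Import all_boot all_order all_algebra.
Set Implicit Arguments. Unset Strict Implicit. Unset Printing Implicit Defensive.
Import Order.TTheory GRing.Theory Num.Theory.
Local Open Scope ring_scope.

(* Pochhammer symbol (l)_k for k : int.
   (l)_n = l (l+1) ... (l+n-1) for n >= 0,
   (l)_{-m} = Gamma(l-m)/Gamma(l) = 1/((l-1)(l-2)...(l-m)) for m >= 1
   (Negz n denotes -(n+1)). *)
Definition poch {F : fieldType} (l : F) (k : int) : F :=
  match k with
  | Posz n => \prod_(i < n) (l + i%:R)
  | Negz n => (\prod_(i < n.+1) (l - (i.+1)%:R))^-1
  end.

(* Formal power series in two variables x, y over F, given by coefficients:
   f p q = coefficient of x^p y^q. *)
Definition fps (F : Type) := nat -> nat -> F.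

Definition fps_mul {F : fieldType} (f g : fps F) : fps F :=
  fun p q => \sum_(i < p.+1) \sum_(j < q.+1) f i j * g (p - i)%N (q - j)%N.

Definition fps_add {F : fieldType} (f g : fps F) : fps F :=
  fun p q => f p q + g p q.

Definition fps_scale {F : fieldType} (c : F) (f : fps F) : fps F :=
  fun p q => c * f p q.

Definition fps_shift {F : fieldType} (l k : nat) (f : fps F) : fps F :=
  fun p q => if ((l <= p) && (k <= q))%N then f (p - l)%N (q - k)%N else 0.

Definition hyp1F1 {F : fieldType} (a c : F) : fps F :=
  fun p q => if q == 0%N then poch a p%:Z / (poch c p%:Z * (p`!)%:R) else 0.

Definition hyp2F1y {F : fieldType} (a b c : F) : fps F :=
  fun p q => if p == 0%N then
     poch a q%:Z * poch b q%:Z / (poch c q%:Z * (q`!)%:R) else 0.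

(* H11(a,b,c;d;x,s*y): the confluent Horn function with y replaced by s*y
   (s = -1 gives H11(a,b,c;d;x,-y)). *)
Definition H11 {F : fieldType} (a b c d s : F) : fps F :=
  fun p q => poch a (p%:Z - q%:Z) * poch b q%:Z * poch c q%:Z
             / (poch d p%:Z * (p`!)%:R * (q`!)%:R) * s ^+ q.

Definition rhs_term {F : fieldType} (a b c d : F) (k l : nat) : fps F :=
  fps_scale
    ((-1) ^+ (k - l) * ((k.-1)`!)%:R / (((l.-1)`!)%:R * (l`!)%:R * ((k - l)`!)%:R)
     * (poch b k%:Z * poch c k%:Z
        / (poch (1 - a) k%:Z * poch (1 - a) (k - l)%N%:Z * poch d l%:Z)))
    (fps_shift l k (H11 (a - k%:R + l%:R) (b + k%:R) (c + k%:R) (d + l%:R) (-1))).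

(* Since rhs_term k l has
   y-adic order >= k, only terms with k <= q contribute to the coefficient of
   x^p y^q; the coefficient of the (formally convergent) sum is therefore this
   finite sum. *)
Definition rhs_sum {F : fieldType} (a b c d : F) : fps F :=
  fun p q => \sum_(1 <= k < q.+1) \sum_(1 <= l < k.+1) rhs_term a b c d k l p q.

(* Main.v *)
Require Import Defs.
From HB Require Import structures.
From mathcomp Require Import all_boot all_order all_algebra.
From mathcomp Require Import ring lra zify.
From Stdlib Require Import FunctionalExtensionality.
Import Order.TTheory GRing.Theory Num.Theory.
Local Open Scope ring_scope.

Module Helpers.
Set Implicit Arguments. Unset Strict Implicit.


Section Poch.
Variable F : fieldType.
Implicit Types x y : F.

Definition NI x := forall z : int, x + z%:~R != 0.

Lemma NI_shift x w : NI x -> NI (x + w%:~R).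
Proof. by move=> h z; rewrite -addrA -rmorphD /=. Qed.

Lemma poch0 x : poch x (Posz 0) = 1.
Proof. by rewrite /poch big_ord0. Qed.

Lemma pochSn x (n : nat) : poch x n.+1%:Z = poch x n%:Z * (x + n%:R).
Proof. by rewrite /poch big_ord_recr. Qed.

Lemma pochS x (n : int) : NI x -> poch x (n + 1) = poch x n * (x + n%:~R).
Proof.
move=> hx; case: n => [m|m].
  by rewrite -PoszD addn1 pochSn.
case: m => [|m].
  have -> : Negz 0 + 1 = 0 by [].
  rewrite poch0 /poch big_ord1 /=.
  have h := hx (Negz 0).
  by rewrite mulVf.
have -> : Negz m.+1 + 1 = Negz m by rewrite !NegzE; lia.
rewrite /poch (big_ord_recr m.+1) /= invfM -mulrA.
have -> : x + (Negz m.+1)%:~R = x - (m.+1).+1%:R.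
  by rewrite NegzE mulrNz.
rewrite mulVf ?mulr1 //.
have := hx (Negz m.+1); by rewrite NegzE mulrNz.
Qed.

Lemma NI_ne0 x (z : int) : NI x -> x + z%:~R != 0.
Proof. by move=> h; apply: h. Qed.

Lemma pochD x (m n : int) : NI x ->
  poch x (m + n) = poch x m * poch (x + m%:~R) n.
Proof.
move=> hx; have hxm := @NI_shift x m hx.
elim/int_rect: n => [|n IH|n IH].
- by rewrite addr0 poch0 mulr1.
- have -> : (n.+1)%:Z = n%:Z + 1 by lia.
  rewrite addrA !pochS // IH -mulrA; congr (_ * (_ * _)).
  by rewrite rmorphD /= addrA.
- have e1 : m + - n%:Z = (m + - (n.+1)%:Z) + 1 by lia.
  have e2 : - n%:Z = - (n.+1)%:Z + 1 by lia.
  move: IH; rewrite e1 e2 !pochS // => IH.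
  have hne : x + (m + - (n.+1)%:Z)%:~R != 0 by apply: hx.
  apply: (mulIf hne); rewrite IH -mulrA; congr (_ * (_ * _)).
  by rewrite rmorphD /= addrA.
Qed.

Lemma prodN_ord (m : nat) (G : nat -> F) :
  \prod_(i < m) - G i = (-1) ^+ m * \prod_(i < m) G i.
Proof.
elim: m => [|m IH]; first by rewrite !big_ord0 expr0 mulr1.
by rewrite !big_ord_recr /= IH exprSr; ring.
Qed.

Lemma poch_refl x (m : nat) :
  poch (x - m%:R) m%:Z = (-1) ^+ m * poch (1 - x) m%:Z.
Proof.
rewrite /poch -(prodN_ord m (fun i : nat => 1 - x + i%:R)) (reindex_inj rev_ord_inj) /=; apply: eq_bigr => i _.
have him : (i.+1 <= m)%N by apply: ltn_ord.
rewrite natrB //; ring.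
Qed.

Lemma pochnD x (m n : nat) :
  poch x (m + n)%N%:Z = poch x m%:Z * poch (x + m%:R) n%:Z.
Proof.
elim: n => [|n IH]; first by rewrite addn0 poch0 mulr1.
by rewrite addnS !pochSn IH natrD; ring.
Qed.

Lemma pascal_sum (q : nat) (f : nat -> F) :
  \sum_(k < q.+2) 'C(q.+1, k)%:R * f k
  = \sum_(k < q.+1) 'C(q, k)%:R * (f k + f k.+1).
Proof.
rewrite big_ord_recl /=.
under eq_bigr => i _ do rewrite /bump /= binS natrD mulrDl.
rewrite big_split /= [in RHS]big_ord_recl /=.
under [in RHS]eq_bigr => i _ do rewrite /bump /= mulrDr.
rewrite [in RHS]big_split /= mulrDr !bin0 -!addrA; congr (_ + _).
rewrite (big_ord_recr q) /= bin_small // mul0r addr0.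
rewrite (big_ord_recl q) /= bin0.
rewrite addrCA; congr (_ + (_ + _)); apply: eq_bigr => i _; by rewrite /bump /= !add1n.
Qed.

Lemma chu (x : F) (q : nat) : forall c : F,
  \sum_(k < q.+1) 'C(q, k)%:R * ((-1) ^+ k * poch x k%:Z * poch (c + k%:R) (q - k)%N%:Z)
  = poch (c - x) q%:Z.
Proof.
elim: q => [|q IH] c.
  by rewrite big_ord1 /= !big_ord0 expr0 !mulr1 bin0.
rewrite (pascal_sum q (fun k => (-1)^+k * poch x k%:Z * poch (c + k%:R) (q.+1 - k)%N%:Z)).
have -> : poch (c - x) q.+1%:Z = (c - x) * poch (c + 1 - x) q%:Z.
  by rewrite -add1n pochnD /poch big_ord1 addr0 addrAC.
rewrite -(IH (c + 1)) mulr_sumr; apply: eq_bigr => k _.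
have hk : (k <= q)%N by rewrite -ltnS.
move: k hk => [k hkq] hk.
rewrite subSS subSn // (pochSn x k) exprS -(add1n (q - k)) pochnD.
have -> : c + k%:R + 1%:R = c + 1 + k%:R by ring.
have -> : c + (1 + k)%:R = c + 1 + k%:R by rewrite natrD; ring.
rewrite {2}/poch big_ord1 addr0; ring.
Qed.
End Poch.



Section Main.
Variable C : numClosedFieldType.
Implicit Types x y : C.

Lemma poch_neq0 x (n : nat) : (forall i : nat, x + i%:R != 0) -> poch x n%:Z != 0.
Proof. by move=> h; rewrite /poch prodf_seq_neq0; apply/allP => i _ /=. Qed.

Lemma NI_poch_neq0 x (n : nat) : NI x -> poch x n%:Z != 0.
Proof. by move=> h; apply: poch_neq0 => i; exact: (h i%:Z). Qed.

Lemma fact_neq0 n : (n`!)%:R != 0 :> C.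
Proof. by rewrite pnatr_eq0 -lt0n fact_gt0. Qed.

Lemma NI_of (a : C) : (forall n : int, a != n%:~R) -> NI a.
Proof.
move=> ha z; apply/negP; rewrite addr_eq0 => /eqP h; move: (ha (- z)).
by rewrite mulrNz -h eqxx.
Qed.

Lemma NI_1m (a : C) : NI a -> NI (1 - a).
Proof.
move=> ha z; apply/negP => /eqP h; move: (ha (- (1 + z))).
rewrite mulrNz rmorphD /= mulr1z.
have -> : a - (1 + z%:~R) = - (1 - a + z%:~R) by ring.
by rewrite h oppr0 eqxx.
Qed.

Definition Kc (a b c d : C) (p q : nat) :=
  (-1) ^+ q * poch b q%:Z * poch c q%:Z * poch a (p%:Z - q%:Z)
  / (poch d p%:Z * (p`!)%:R).

Lemma intnat (n : nat) : (n%:Z)%:~R = n%:R :> C.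
Proof. by rewrite -pmulrn. Qed.

Lemma term_eq (a b c d : C) (k l p q : nat) (ha : NI a)
  (hd : forall i : nat, d + i%:R != 0)
  (hl : (1 <= l)%N) (hlk : (l <= k)%N) (hkq : (k <= q)%N) :
  rhs_term a b c d k l p q = Kc a b c d p q *
   ((-1) ^+ k * ('C(p, l) * 'C(k.-1, k - l))%:R
     / (poch (1 - a) k%:Z * ((q - k)`!)%:R)).
Proof.
rewrite /rhs_term /fps_scale /fps_shift hkq andbT.
case: (leqP l p) => hlp; last first.
  by rewrite bin_small // mul0n !(mulr0, mul0r).
rewrite /H11.
have eZ : ((p - l)%N%:Z - (q - k)%N%:Z) = (k - l)%N%:Z + (p%:Z - q%:Z) by lia.
have hNI : NI (a - k%:R + l%:R).
  have -> : a - k%:R + l%:R = a + (l%:Z - k%:Z)%:~R.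
    by rewrite rmorphB /= !intnat; ring.
  exact: NI_shift.
rewrite eZ pochD //.
have -> : a - k%:R + l%:R + ((k - l)%N%:Z)%:~R = a.
  by rewrite intnat natrB //; ring.
have -> : a - k%:R + l%:R = a - (k - l)%N%:R by rewrite natrB //; ring.
rewrite poch_refl /Kc.
have eb : forall y : C, poch y q%:Z = poch y k%:Z * poch (y + k%:R) (q - k)%N%:Z.
  by move=> y; rewrite -pochnD subnKC.
rewrite (eb b) (eb c).
have -> : poch d p%:Z = poch d l%:Z * poch (d + l%:R) (p - l)%N%:Z.
  by rewrite -pochnD subnKC.
have f1 := bin_fact hlp.
have hk1 : (k - l <= k.-1)%N by lia.
have f2 := bin_fact hk1.
rewrite (_ : (k.-1 - (k - l))%N = l.-1) in f2; last by lia.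
rewrite -f1 -f2 !natrM.
have -> : (-1) ^+ q = (-1) ^+ (q - k) * (-1) ^+ k :> C by rewrite -exprD subnK.
have hA1 := NI_poch_neq0 k (NI_1m ha).
have hA2 := NI_poch_neq0 (k - l) (NI_1m ha).
have hD1 := poch_neq0 l hd.
have hD2 : poch (d + l%:R) (p - l)%N%:Z != 0.
  by apply: poch_neq0 => i; rewrite -addrA -natrD.
have hC : 'C(p, l)%:R != 0 :> C by rewrite pnatr_eq0 -lt0n bin_gt0.
have hF1 := fact_neq0 (l.-1); have hF2 := fact_neq0 l; have hF3 := fact_neq0 (k - l).
have hF4 := fact_neq0 (p - l); have hF5 := fact_neq0 (q - k).
rewrite -(signr_odd _ (k - l)%N) -(signr_odd _ k).
move: hA1 hA2 hD1 hD2; rewrite /poch => hA1 hA2 hD1 hD2.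
by case: (odd (k - l)%N); case: (odd k) => /=; field;
  rewrite hA1 hA2 hD1 hD2 hC hF1 hF2 hF3 hF4 hF5.
Qed.

Lemma rise_nat (n k : nat) : (\prod_(i < k) (n.+1 + i) = 'C(n + k, k) * k`!)%N.
Proof.
have h1 : (\prod_(i < k) (n.+1 + i) * n`! = (n + k)`!)%N.
  elim: k => [|k IH]; first by rewrite big_ord0 mul1n addn0.
  by rewrite big_ord_recr /= mulnAC IH addnS factS mulnC addSn.
have h2 : ('C(n + k, k) * k`! * n`! = (n + k)`!)%N.
  by rewrite -mulnA -(bin_fact (leq_addl n k)) addnK.
by apply/eqP; rewrite -(eqn_pmul2r (fact_gt0 n)) h1 h2.
Qed.

Lemma rise_bin (n k : nat) : poch (n%:R : C) k%:Z = ('C((n + k).-1, k) * k`!)%:R.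
Proof.
case: n => [|n].
  case: k => [|k]; first by rewrite poch0 bin0 mul1n.
  rewrite bin_small ?mul0n; last by rewrite add0n.
  by rewrite /poch big_ord_recl /= addr0 mul0r.
rewrite addSn /= -rise_nat /poch natr_prod; apply: eq_bigr => i _.
by rewrite natrD.
Qed.

Lemma vander (p k : nat) : (0 < k)%N ->
  (\sum_(1 <= l < k.+1) 'C(p, l) * 'C(k.-1, k - l) = 'C((p + k).-1, k))%N.
Proof.
case: k => // k _.
move: (binomial.Vandermonde p k k.+1).
rewrite big_ord_recl /= (@bin_small k k.+1) // muln0 add0n addnS /= => <-.
rewrite big_add1 /= big_mkord; apply: eq_bigr => i _; by rewrite /bump.
Qed.

Lemma chu_div (a : C) (p q : nat) : NI a ->
  \sum_(k < q.+1) (-1) ^+ k * ('C((p + k).-1, k))%:R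
      / (poch (1 - a) k%:Z * ((q - k)`!)%:R)
  = poch (1 - a - p%:R) q%:Z / (poch (1 - a) q%:Z * (q`!)%:R).
Proof.
move=> ha.
rewrite -chu mulr_suml; apply: eq_bigr => [[k hk]] _.
have hkq : (k <= q)%N by rewrite -ltnS.
rewrite rise_bin -(bin_fact hkq) !natrM.
have -> : poch (1 - a) q%:Z = poch (1 - a) k%:Z * poch (1 - a + k%:R) (q - k)%N%:Z.
  by rewrite -pochnD subnKC.
have hA1 := NI_poch_neq0 k (NI_1m ha).
have hA2 := NI_poch_neq0 (q - k) (NI_shift k (NI_1m ha)).
rewrite intnat in hA2.
have hC : 'C(q, k)%:R != 0 :> C by rewrite pnatr_eq0 -lt0n bin_gt0.
have hF1 := fact_neq0 k; have hF2 := fact_neq0 (q - k).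
move: hA1 hA2; rewrite /poch => hA1 hA2.
by field; rewrite hA1 hA2 hC hF1 hF2.
Qed.

Lemma refl_final (a : C) (p q : nat) : NI a ->
  poch a p%:Z = (-1) ^+ q * poch a (p%:Z - q%:Z) * poch (1 - a - p%:R) q%:Z.
Proof.
move=> ha.
have -> : poch a p%:Z = poch a ((p%:Z - q%:Z) + q%:Z) by rewrite subrK.
rewrite pochD //.
have -> : a + (p%:Z - q%:Z)%:~R = (a + p%:R) - q%:R by rewrite rmorphB /= !intnat; ring.
rewrite poch_refl (_ : 1 - (a + p%:R) = 1 - a - p%:R); last by ring.
ring.
Qed.

Lemma lhs_coef (a b c d : C) (p q : nat) :
  fps_mul (hyp1F1 a d) (hyp2F1y b c (1 - a)) p q
  = poch a p%:Z / (poch d p%:Z * (p`!)%:R)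
    * (poch b q%:Z * poch c q%:Z / (poch (1 - a) q%:Z * (q`!)%:R)).
Proof.
rewrite /fps_mul big_ord_recr /= [X in X + _]big1 ?add0r; last first.
  move=> i _; apply: big1 => j _.
  by rewrite /hyp2F1y subn_eq0 leqNgt ltn_ord /= mulr0.
rewrite big_ord_recl /= [X in _ + X]big1 ?addr0; last first.
  by move=> i _; rewrite /hyp1F1 /= mul0r.
by rewrite /hyp1F1 /hyp2F1y subnn subn0 /=.
Qed.

Lemma H11_coef (a b c d : C) (p q : nat) (hd : forall i : nat, d + i%:R != 0) :
  H11 a b c d (-1) p q = Kc a b c d p q / (q`!)%:R.
Proof.
rewrite /H11 /Kc.
have hD := poch_neq0 p hd.
have hF1 := fact_neq0 p; have hF2 := fact_neq0 q.
move: hD; rewrite /poch => hD.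
by field; rewrite hD hF1 hF2.
Qed.

Lemma sum_coef (a b c d : C) (p q : nat) (ha : NI a)
  (hd : forall i : nat, d + i%:R != 0) :
  rhs_sum a b c d p q = Kc a b c d p q *
    \sum_(1 <= k < q.+1) (-1) ^+ k * ('C((p + k).-1, k))%:R
      / (poch (1 - a) k%:Z * ((q - k)`!)%:R).
Proof.
rewrite /rhs_sum mulr_sumr; apply: eq_big_nat => k /andP[hk1 hk2].
have hkq : (k <= q)%N by rewrite -ltnS.
rewrite (@eq_big_nat _ _ _ 1 k.+1 _ (fun l => Kc a b c d p q *
   ((-1) ^+ k * ('C(p, l) * 'C(k.-1, k - l))%:R
     / (poch (1 - a) k%:Z * ((q - k)`!)%:R)))); last first.
  by move=> l /andP[hl1 hl2]; apply: term_eq => //; rewrite -ltnS.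
rewrite -mulr_sumr -mulr_suml -mulr_sumr -natr_sum vander //.
Qed.
End Main.

End Helpers.
Import Helpers.


Theorem mainTheorem13 (C : numClosedFieldType) (a b c d : C)
  (ha : forall n : int, a != n%:~R)
  (hd : forall n : nat, d != - n%:R) :
  fps_mul (hyp1F1 a d) (hyp2F1y b c (1 - a))
  = fps_add (H11 a b c d (-1)) (rhs_sum a b c d).
Proof.
have ha' := NI_of ha.
have hd' : forall i : nat, d + i%:R != 0.
  move=> i; apply/negP; rewrite addr_eq0 => /eqP h.
  by move: (hd i); rewrite h eqxx.
apply: functional_extensionality => p; apply: functional_extensionality => q.
rewrite lhs_coef /fps_add H11_coef // sum_coef // -mulrDr.
have -> : (q`!)%:R^-1 + \sum_(1 <= k < q.+1) (-1) ^+ k * ('C((p + k).-1, k))%:R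
      / (poch (1 - a) k%:Z * ((q - k)`!)%:R)
  = poch (1 - a - p%:R) q%:Z / (poch (1 - a) q%:Z * (q`!)%:R).
  rewrite -chu_div // big_ord_recl big_add1 /= big_mkord.
  rewrite big_ord0 expr0 bin0 subn0 !mul1r; congr (_ + _).
rewrite (refl_final p q ha') /Kc.
have hD := poch_neq0 p hd'.
have hA := NI_poch_neq0 q (NI_1m ha').
have hF1 := fact_neq0 C p; have hF2 := fact_neq0 C q.
move: hD hA; rewrite /poch => hD hA.
by field; rewrite hD hA hF1 hF2.
Qed.
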